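(* Let $R$ be a $*$-ring. Then $R$ is strongly $J$-$*$-clean if and only if $R/J(R)$ is Boolean and $R$ is strongly $*$-clean.
   Context: All rings are associative with identity. A $*$-ring is a ring $R$ with an involution $*$, i.e. a map $a\mapsto a^*$ with $(a+b)^*=a^*+b^*$, $(ab)^*=b^*a^*$, $(a^* )^*=a$. $U(R)$ denotes the group of units and $J(R)$ the Jacobson radical of $R$. A projection is an element $e$ with $e^2=e=e^*$. $R$ is strongly $J$-$*$-clean if every $a\in R$ can be written $a=e+u$ with $e$ a projection, $u\in J(R)$ and $ae=ea$. $R$ is strongly $*$-clean if every $a\in R$ can be written $a=e+u$ with $e$ a projection, $u\in U(R)$ and $eu=ue$. A ring is Boolean if every element is idempotent. *)

(* Defs.v *)
From HB Require Import structures.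
From mathcomp Require Import all_boot all_order all_algebra.
Set Implicit Arguments. Unset Strict Implicit. Unset Printing Implicit Defensive.
Import GRing.Theory.
Local Open Scope ring_scope.

Definition is_involution (R : pzRingType) (inv : R -> R) : Prop :=
  [/\ forall a b : R, inv (a + b) = inv a + inv b,
      forall a b : R, inv (a * b) = inv b * inv a
    & forall a : R, inv (inv a) = a].

Definition is_unit_elt (R : pzRingType) (u : R) : Prop :=
  exists v : R, u * v = 1 /\ v * u = 1.

Definition in_jacobson (R : pzRingType) (a : R) : Prop :=
  forall r : R, is_unit_elt (1 - r * a).

Definition is_projection (R : pzRingType) (inv : R -> R) (e : R) : Prop :=
  e * e = e /\ inv e = e.

Definition strongly_J_star_clean (R : pzRingType) (inv : R -> R) : Prop :=
  forall a : R, exists e u : R,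
    [/\ a = e + u, is_projection inv e, in_jacobson u & a * e = e * a].

Definition strongly_star_clean (R : pzRingType) (inv : R -> R) : Prop :=
  forall a : R, exists e u : R,
    [/\ a = e + u, is_projection inv e, is_unit_elt u & e * u = u * e].

(* R / J(R) is Boolean: every coset a + J(R) is idempotent,
   i.e. a*a - a lies in J(R) for every a in R. *)
Definition quotient_by_J_boolean (R : pzRingType) : Prop :=
  forall a : R, in_jacobson (a * a - a).

(* Main.v *)
Require Import Defs.
From mathcomp Require Import all_boot all_order all_algebra.
Import GRing.Theory.
Local Open Scope ring_scope.

Section S.
Variable R : pzRingType.

Lemma unit_mul (x y : R) : is_unit_elt x -> is_unit_elt y -> is_unit_elt (x*y).
Proof.
move=> [a [h1 h2]] [b [h3 h4]]; exists (b*a); split.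
  by rewrite mulrA -(mulrA x) h3 mulr1.
by rewrite mulrA -(mulrA b) h2 mulr1.
Qed.

Lemma unit_swap (x y : R) : is_unit_elt (1 - x*y) -> is_unit_elt (1 - y*x).
Proof.
move=> [v [h1 h2]]; exists (1 + y*v*x).
have e1 : x*y*v = v - 1 by apply/eqP; rewrite eq_sym subr_eq -h1 mulrBl mul1r addrC subrK.
have e2 : v*(x*y) = v - 1 by apply/eqP; rewrite eq_sym subr_eq -h2 mulrBr mulr1 addrC subrK.
split.
  rewrite mulrBl !mul1r mulrDr mulr1.
  have -> : y*x*(y*v*x) = y*(x*y*v)*x by rewrite !mulrA.
  by rewrite e1 mulrBr mulr1 mulrBl (addrC (y*x)) subrK addrK.
rewrite mulrDl mul1r mulrBr mulr1.
have -> : y*v*x*(y*x) = y*(v*(x*y))*x by rewrite !mulrA.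
rewrite e2 mulrBr mulr1 mulrBl.
by rewrite opprB (addrC (y*v*x)) subrK subrK.
Qed.

Lemma J0 : in_jacobson (0 : R).
Proof. by move=> r; exists 1; rewrite mulr0 subr0 mulr1. Qed.

Lemma JMl (s a : R) : in_jacobson a -> in_jacobson (s*a).
Proof. by move=> h r; have := h (r*s); rewrite -mulrA. Qed.

Lemma JMr (a s : R) : in_jacobson a -> in_jacobson (a*s).
Proof. by move=> h r; rewrite mulrA; apply: unit_swap; rewrite mulrA; apply: h. Qed.

Lemma JN (a : R) : in_jacobson a -> in_jacobson (-a).
Proof. by move=> h r; rewrite mulrN -mulNr. Qed.

Lemma JD (a b : R) : in_jacobson a -> in_jacobson b -> in_jacobson (a+b).
Proof.
move=> ha hb r; have [w [h1 h2]] := ha r.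
have -> : 1 - r*(a+b) = (1 - r*a) * (1 - (w*r)*b).
  by rewrite mulrBr mulr1 !mulrA h1 mul1r mulrDr opprD addrA.
by apply: unit_mul; [exists w | apply: hb].
Qed.

Lemma JB (a b : R) : in_jacobson a -> in_jacobson b -> in_jacobson (a-b).
Proof. by move=> ha hb; apply: JD => //; apply: JN. Qed.


Lemma zh (V : zmodType) (e p q u : V) : e + p + q - (e + u) = p + q - u.
Proof. by rewrite opprD addrA -(addrA e) (addrC e) addrK. Qed.

Lemma proj1e (inv : R -> R) (e : R) : is_involution inv ->
  is_projection inv e -> is_projection inv (1 - e).
Proof.
move=> [iD iM iI] [ee ie].
have inv0 : inv 0 = 0.
  have := iD 0 0; rewrite addr0 => /(congr1 (fun z => z - inv 0)).
  by rewrite subrr addrK.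
have invN : forall x, inv (- x) = - inv x.
  move=> x; have := iD x (-x); rewrite subrr inv0 => /eqP.
  by rewrite eq_sym addrC addr_eq0 => /eqP.
have inv1 : inv 1 = 1.
  by have := iM (inv 1) 1; rewrite !mulr1 iI mulr1.
split; first by rewrite mulrBl mul1r mulrBr mulr1 ee subrr subr0.
by rewrite iD invN inv1 ie.
Qed.

End S.

Theorem proposition2p6 (R : pzRingType) (inv : R -> R) :
  is_involution inv ->
  (strongly_J_star_clean inv <->
   (quotient_by_J_boolean R /\ strongly_star_clean inv)).
Proof.
move=> hinv; split.
  move=> H; split.
    move=> a; have [e [u [-> [ee ie] hu ce]]] := H a.
    rewrite mulrDl !mulrDr ee zh.
    apply: JB => //; apply: JD; first exact: JMl.
    by apply: JD; [apply: JMr | apply: JMl].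
  move=> a; have [e [u [ha pe hu ce]]] := H a.
  have pf := @proj1e R inv e hinv pe.
  case: pe => ee ie.
  exists (1 - e), (a - (1 - e)); split => //.
  - by rewrite addrC subrK.
  - set s := e - (1 - e).
    have ef : e * (1 - e) = 0 by rewrite mulrBr mulr1 ee subrr.
    have fe : (1 - e) * e = 0 by rewrite mulrBl mul1r ee subrr.
    have ss : s * s = 1.
      rewrite /s mulrBl (mulrBr e) (mulrBr (1 - e)) ee ef fe pf.1 sub0r subr0 opprK.
      by rewrite addrC subrK.
    have -> : a - (1 - e) = s * (1 - (- s) * u).
      by rewrite mulrBr mulr1 mulNr mulrN opprK mulrA ss mul1r ha /s addrAC.
    apply: unit_mul; first by exists s.
    exact: hu.
  - rewrite mulrBr mulrBl pf.1; congr (_ - _).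
    by rewrite mulrBl mulrBr mul1r mulr1 ce.
move=> [HB HS] a; have [e [u [ha pe [v [uv vu]] ce]]] := HS a.
have pf := @proj1e R inv e hinv pe.
case: pe => ee ie.
exists (1 - e), (a - (1 - e)); split => //.
- by rewrite addrC subrK.
- rewrite ha opprB addrACA; apply: JD.
    have := HB (1 + 1); rewrite mulrDl mul1r addrK => h2.
    by rewrite -{1 2}(mulr1 e) -mulrDr; apply: JMl.
  have := HB u; rewrite -{3}(mulr1 u) -mulrBr => /(@JMl R v).
  by rewrite mulrA vu mul1r.
- rewrite mulrBr mulrBl mulr1 mul1r; congr (_ - _).
  by rewrite ha mulrDl mulrDr ce.
Qed.
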